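(* Let $u\in\mathcal H_k$ and let $\lambda_1,\lambda_2,\dots$ be selected from $\Lambda\subset\mathcal H_k'$ by a PDE-$\beta$-greedy algorithm with $\beta\in[0,\infty]$ applied to $u$, and let $r_i:=u-\Pi_{V(\Lambda_i)}(u)$. Then for $i=0,1,\dots$: (a) if $\beta\in[0,1]$: $$\sup_{\lambda\in\Lambda}|\lambda(r_i)| \le |\lambda_{i+1}(r_i)|^{\beta}\cdot P_{\Lambda_i}(\lambda_{i+1})^{1-\beta}\cdot\|r_i\|_{\mathcal H_k}^{1-\beta};$$ (b) if $\beta\in(1,\infty]$ (with $1/\infty:=0$): $$\sup_{\lambda\in\Lambda}|\lambda(r_i)| \le \frac{|\lambda_{i+1}(r_i)|}{P_{\Lambda_i}(\lambda_{i+1})^{1-1/\beta}}\cdot\sup_{\lambda\in\Lambda}P_{\Lambda_i}(\lambda)^{1-1/\beta}.$$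
   Context: $\mathcal H_k$ is the reproducing kernel Hilbert space of a kernel $k$; each $\lambda\in\mathcal H_k'$ has Riesz representer $v_\lambda$. For $\Lambda_i=\{\lambda_1,\dots,\lambda_i\}$ ($\Lambda_0=\emptyset$), $V(\Lambda_i)=\mathrm{span}\{v_\mu:\mu\in\Lambda_i\}$, $\Pi_{V(\Lambda_i)}$ the orthogonal projection, and $P_{\Lambda_i}(\lambda):=\|v_\lambda-\Pi_{V(\Lambda_i)}v_\lambda\|_{\mathcal H_k}$ the generalized power function. A PDE-$\beta$-greedy algorithm (for a set $\Lambda$ of functionals, e.g. $\Lambda=\{\delta_x\circ L:x\in\Omega\}\cup\{\delta_x:x\in\partial\Omega\}$) selects, for $\beta\in[0,\infty)$, $\lambda_{n+1}\in\arg\max_{\lambda\in\Lambda\setminus\Lambda_n,\ \lambda\neq0}|\lambda(u-\Pi_{V(\Lambda_n)}u)|^{\beta}\,P_{\Lambda_n}(\lambda)^{1-\beta}$, and for $\beta=\infty$, $\lambda_{n+1}\in\arg\max_{\lambda\in\Lambda\setminus\Lambda_n,\ \lambda\ne0}|\lambda(u-\Pi_{V(\Lambda_n)}u)|/P_{\Lambda_n}(\lambda)$ (maximizers assumed to exist). Special cases: $\beta=0$ PDE-$P$-greedy, $\beta=1/2$ PDE-$f\cdot P$-greedy, $\beta=1$ PDE-$f$-greedy, $\beta=\infty$ PDE-$f/P$-greedy. *)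

(* Defs.v *)
From HB Require Import structures.
From mathcomp Require Import all_boot all_order all_algebra.
From mathcomp Require Import all_classical all_reals all_analysis.
Set Implicit Arguments. Unset Strict Implicit. Unset Printing Implicit Defensive.
Import Order.TTheory GRing.Theory Num.Theory.
Import numFieldNormedType.Exports.
Local Open Scope classical_set_scope.
Local Open Scope ring_scope.

Definition inner_product (R : realType) (V : lmodType R) (dot : V -> V -> R) : Prop :=
  [/\ (forall x y, dot x y = dot y x),
      (forall (a : R) x y z, dot (a *: x + y) z = a * dot x z + dot y z),
      (forall x, 0 <= dot x x) &
      (forall x, dot x x = 0 -> x = 0)].

(* Riesz representer v_lambda of a functional lambda (chosen classically;
   it exists and is unique for every lambda in the dual of a Hilbert space). *)
Definition riesz (R : realType) (V : lmodType R) (dot : V -> V -> R)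
  (l : V -> R) : V := xget 0 [set v | forall f, l f = dot v f].

Definition in_span (R : realType) (V : lmodType R) (n : nat) (g : nat -> V)
  (x : V) : Prop := exists c : 'I_n -> R, x = \sum_(j < n) c j *: g j.

Definition proj (R : realType) (V : lmodType R) (dot : V -> V -> R)
  (n : nat) (g : nat -> V) (x : V) : V :=
  xget 0 [set p | in_span n g p /\ (forall j, (j < n)%N -> dot (x - p) (g j) = 0)].

(* Lambda_n = {lam 0, ..., lam (n-1)};  representers of its elements *)
Definition reps (R : realType) (V : lmodType R) (dot : V -> V -> R)
  (lam : nat -> V -> R) : nat -> V := fun j => riesz dot (lam j).

Definition residual (R : realType) (V : lmodType R) (dot : V -> V -> R)
  (lam : nat -> V -> R) (u : V) (n : nat) : V :=
  u - proj dot n (reps dot lam) u.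

Definition power_fun (R : realType) (V : normedModType R) (dot : V -> V -> R)
  (lam : nat -> V -> R) (n : nat) (l : V -> R) : R :=
  `| riesz dot l - proj dot n (reps dot lam) (riesz dot l) |.

(* selection criterion of the PDE-beta-greedy algorithm, beta in [0, +oo]:
   a = |lambda(r_n)|, p = P_{Lambda_n}(lambda).  Conventions: powR (0 `^ 0 = 1,
   0 `^ x = 0 for x <> 0) and x / 0 = 0. *)
Definition greedy_score (R : realType) (b : \bar R) (a p : R) : R :=
  match b with
  | EFin beta => a `^ beta * p `^ (1 - beta)
  | +oo%E => a / p
  | -oo%E => 0
  end.

(* step n of the greedy algorithm: lam n (= lambda_{n+1}) is a maximizer *)
Definition greedy_step (R : realType) (V : normedModType R) (dot : V -> V -> R)
  (Lam : set (V -> R)) (u : V) (b : \bar R) (lam : nat -> V -> R) (n : nat) : Prop :=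
  let r := residual dot lam u n in
  [/\ Lam (lam n),
      (forall j, (j < n)%N -> lam n <> lam j),
      lam n <> (fun=> 0) &
      (forall l, Lam l -> (forall j, (j < n)%N -> l <> lam j) -> l <> (fun=> 0) ->
         greedy_score b `|l r| (power_fun dot lam n l)
         <= greedy_score b `|lam n r| (power_fun dot lam n (lam n)))].

Definition exp_b (R : realType) (b : \bar R) : R :=
  match b with EFin beta => 1 - beta^-1 | _ => 1 end.

(* Main.v *)
Require Import Defs.
From HB Require Import structures.
From mathcomp Require Import all_boot all_order all_algebra.
From mathcomp Require Import all_classical all_reals all_analysis.
From mathcomp Require Import ring lra.
Import Order.TTheory GRing.Theory Num.Theory.
Import numFieldNormedType.Exports.
Set Implicit Arguments. Unset Strict Implicit. Unset Printing Implicit Defensive.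
Local Open Scope classical_set_scope.
Local Open Scope ring_scope.

Lemma dotDl (R : realType) (V : lmodType R) (dot : V -> V -> R) :
  inner_product dot -> forall x y z, dot (x + y) z = dot x z + dot y z.
Proof. rewrite /inner_product; case=> _ H _ _ x y z; by have := H 1 x y z; rewrite scale1r mul1r. Qed.

Lemma dot0l (R : realType) (V : lmodType R) (dot : V -> V -> R) :
  inner_product dot -> forall z, dot 0 z = 0.
Proof.
move=> Hd z; have := dotDl Hd 0 0 z; rewrite addr0 => h.
lra.
Qed.

Lemma dotZl (R : realType) (V : lmodType R) (dot : V -> V -> R) :
  inner_product dot -> forall a x z, dot (a *: x) z = a * dot x z.
Proof. move=> Hd a x z; have [_ H _ _] := Hd; by have := H a x 0 z; rewrite addr0 dot0l // addr0. Qed.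

Lemma dotNl (R : realType) (V : lmodType R) (dot : V -> V -> R) :
  inner_product dot -> forall x z, dot (- x) z = - dot x z.
Proof. by move=> Hd x z; rewrite -scaleN1r dotZl // mulN1r. Qed.

Lemma dotBl (R : realType) (V : lmodType R) (dot : V -> V -> R) :
  inner_product dot -> forall x y z, dot (x - y) z = dot x z - dot y z.
Proof. by move=> Hd x y z; rewrite dotDl // dotNl. Qed.

Lemma dotC (R : realType) (V : lmodType R) (dot : V -> V -> R) :
  inner_product dot -> forall x y, dot x y = dot y x.
Proof. by move=> [H _ _ _]. Qed.

Lemma dotDr (R : realType) (V : lmodType R) (dot : V -> V -> R) :
  inner_product dot -> forall x y z, dot z (x + y) = dot z x + dot z y.
Proof. by move=> Hd x y z; rewrite dotC // dotDl // !(dotC Hd z). Qed.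

Lemma dot_sumr (R : realType) (V : lmodType R) (dot : V -> V -> R) :
  inner_product dot -> forall n (F : 'I_n -> V) z,
  dot z (\sum_(j < n) F j) = \sum_(j < n) dot z (F j).
Proof.
move=> Hd; elim=> [|n IH] F z; first by rewrite !big_ord0 dotC // dot0l.
by rewrite !big_ord_recr /= dotDr // IH.
Qed.

Lemma span_orth (R : realType) (V : lmodType R) (dot : V -> V -> R) :
  inner_product dot -> forall n g z y, (forall j, (j < n)%N -> dot z (g j) = 0) ->
  in_span n g y -> dot z y = 0.
Proof.
move=> Hd n g z y Hz [c ->]; rewrite dot_sumr //; apply: big1 => j _.
by rewrite dotC // dotZl // (dotC Hd (g j)) Hz ?mulr0.
Qed.

Lemma span_add (R : realType) (V : lmodType R) n g (x y : V) :
  in_span n g x -> in_span n g y -> in_span n g (x + y).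
Proof.
move=> [c ->] [d ->]; exists (fun j => c j + d j).
by rewrite -big_split; apply: eq_bigr => j _; rewrite scalerDl.
Qed.

Lemma span_scale (R : realType) (V : lmodType R) n g (a : R) (x : V) :
  in_span n g x -> in_span n g (a *: x).
Proof.
move=> [c ->]; exists (fun j => a * c j).
by rewrite scaler_sumr; apply: eq_bigr => j _; rewrite scalerA.
Qed.

Lemma span_sub (R : realType) (V : lmodType R) n g (x y : V) :
  in_span n g x -> in_span n g y -> in_span n g (x - y).
Proof. by move=> hx hy; apply: span_add => //; rewrite -scaleN1r; apply: span_scale. Qed.

Lemma span_lift (R : realType) (V : lmodType R) n g (x : V) :
  in_span n g x -> in_span n.+1 g x.
Proof.
move=> [c ->]; exists (fun j : 'I_n.+1 => odflt 0 (omap c (insub (val j)))).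
rewrite big_ord_recr /= insubF ?ltnn // scale0r addr0.
by apply: eq_bigr => j _; rewrite /= valK.
Qed.

Lemma span_last (R : realType) (V : lmodType R) n (g : nat -> V) :
  in_span n.+1 g (g n).
Proof.
exists (fun j : 'I_n.+1 => ((val j == n) : nat)%:R).
rewrite big_ord_recr /= eqxx scale1r big1 ?add0r // => j _.
by rewrite /= ltn_eqF // scale0r.
Qed.

Lemma proj_ex (R : realType) (V : lmodType R) (dot : V -> V -> R) :
  inner_product dot -> forall n (g : nat -> V) x, exists p,
  in_span n g p /\ (forall j, (j < n)%N -> dot (x - p) (g j) = 0).
Proof.
move=> Hd; elim=> [|n IH] g x.
  by exists 0; split=> [|j //]; exists (fun=> 0); rewrite big_ord0.
have [p1 [hp1 o1]] := IH g x.
have [q [hq oq]] := IH g (g n).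
have [w hw] : exists w, w = g n - q by eexists.
have ow : forall j, (j < n)%N -> dot w (g j) = 0 by move=> j hj; rewrite hw oq.
have e1 : dot (x - p1) q = 0 := span_orth Hd o1 hq.
have e2 : dot w q = 0 := span_orth Hd ow hq.
have gnE : g n = w + q by rewrite hw subrK.
have [w0|wn0] := eqVneq (dot w w) 0.
  have wz : w = 0 by have [_ _ _ H] := Hd; apply: H.
  exists p1; split; first exact: span_lift.
  move=> j; rewrite ltnS leq_eqVlt => /orP[/eqP ->|jn]; last exact: o1.
  by rewrite gnE wz add0r.
have [c hc] : exists c, c = dot (x - p1) w / dot w w by eexists.
exists (p1 + c *: w); split.
  apply: span_add; first exact: span_lift.
  rewrite hw; apply: span_scale; apply: span_sub; [exact: span_last|exact: span_lift].
have E : x - (p1 + c *: w) = (x - p1) - c *: w by rewrite opprD addrA.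
move=> j; rewrite E ltnS leq_eqVlt => /orP[/eqP ->|jn]; last first.
  by rewrite dotBl // dotZl // o1 // ow // mulr0 subr0.
rewrite gnE dotDr // (dotBl Hd (x - p1) (c *: w) w) (dotBl Hd (x - p1) (c *: w) q).
by rewrite !(dotZl Hd) e1 e2 hc mulr0 subr0 addr0 divfK // subrr.
Qed.

Lemma proj_spec (R : realType) (V : lmodType R) (dot : V -> V -> R) :
  inner_product dot -> forall n (g : nat -> V) x,
  in_span n g (Defs.proj dot n g x) /\
  (forall j, (j < n)%N -> dot (x - Defs.proj dot n g x) (g j) = 0).
Proof. move=> Hd n g x; have [p hp] := proj_ex Hd n g x; exact: (@xgetI _ 0 [set p | in_span n g p /\ (forall j, (j < n)%N -> dot (x - p) (g j) = 0)] p hp). Qed.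

Lemma riesz_spec (R : realType) (V : lmodType R) (dot : V -> V -> R) (l : V -> R) :
  (exists v, forall f, l f = dot v f) -> forall f, l f = dot (riesz dot l) f.
Proof. by move=> H; apply: (xgetPex 0 H). Qed.

Lemma dotBr (R : realType) (V : lmodType R) (dot : V -> V -> R) :
  inner_product dot -> forall x y z, dot z (x - y) = dot z x - dot z y.
Proof. by move=> Hd x y z; rewrite dotC // dotBl // !(dotC Hd z). Qed.

Lemma dotZr (R : realType) (V : lmodType R) (dot : V -> V -> R) :
  inner_product dot -> forall a x z, dot z (a *: x) = a * dot z x.
Proof. by move=> Hd a x z; rewrite dotC // dotZl // (dotC Hd z). Qed.

Lemma cs_sq (R : realType) (V : lmodType R) (dot : V -> V -> R) :
  inner_product dot -> forall x y, dot x y ^+ 2 <= dot x x * dot y y.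
Proof.
move=> Hd x y; have [_ _ Hp Hz] := Hd.
have [x0|xn0] := eqVneq (dot x x) 0.
  by rewrite (Hz _ x0) !(dot0l Hd) mul0r expr2 mul0r.
have xp : 0 < dot x x by rewrite lt_def xn0 Hp.
set z := dot x x *: y - dot x y *: x.
have E : dot z z = dot x x * (dot x x * dot y y - dot x y ^+ 2).
  rewrite /z !(dotBl Hd) !(dotBr Hd) !(dotZl Hd) !(dotZr Hd) (dotC Hd y x); ring.
have := Hp z; rewrite E pmulr_rge0 // subr_ge0 //.
Qed.

Lemma cs (R : realType) (V : normedModType R) (dot : V -> V -> R) :
  inner_product dot -> (forall x : V, `|x| = Num.sqrt (dot x x)) ->
  forall x y, `|dot x y| <= `|x| * `|y|.
Proof.
move=> Hd Hn x y; have [_ _ Hp _] := Hd.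
rewrite !Hn -sqrtrM // -sqrtr_sqr ler_sqrt ?mulr_ge0 //.
exact: cs_sq.
Qed.

Lemma beta_ineq (R : realType) (be a p A P : R) : 1 < be -> 0 < a -> 0 < p -> 0 < A -> 0 < P ->
  a `^ be * p `^ (1 - be) <= A `^ be * P `^ (1 - be) ->
  a <= A / P `^ (1 - be^-1) * p `^ (1 - be^-1).
Proof.
move=> b1 a0 p0 A0 P0 h.
have b0 : 0 < be by lra.
have s0 : 0 <= be^-1 by rewrite invr_ge0 ltW.
have h1 : (a `^ be * p `^ (1 - be)) `^ be^-1 <= (A `^ be * P `^ (1 - be)) `^ be^-1.
  by apply: ge0_ler_powR => //; rewrite nnegrE mulr_ge0 ?powR_ge0.
move: h1; rewrite !powRM ?powR_ge0 // -!powRrM mulfV ?gt_eqF //.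
have -> : (1 - be) * be^-1 = - (1 - be^-1) by rewrite mulrBl mul1r mulfV ?gt_eqF //; ring.
have a1 := ltW a0; have A1 := ltW A0.
rewrite !powRN !powRr1 // => h2.
have pe : 0 < p `^ (1 - be^-1) by apply: powR_gt0.
by rewrite -ler_pdivrMr.
Qed.

Theorem lemma4p5 (R : realType) (V : completeNormedModType R)
  (dot : V -> V -> R) (Hdot : inner_product dot)
  (Hnorm : forall x : V, `|x| = Num.sqrt (dot x x))
  (Lam : set (V -> R))
  (Hdual : forall l, Lam l -> exists v : V, forall f, l f = dot v f)
  (u : V) (b : \bar R) (hb : (0 <= b)%E)
  (lam : nat -> V -> R) (i : nat)
  (Hgreedy : forall n, (n <= i)%N -> greedy_step dot Lam u b lam n) :
  let r := residual dot lam u i in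
  (forall beta : R, b = beta%:E -> beta <= 1 ->
     (ereal_sup [set (`|l r|)%:E | l in Lam]
      <= (`|lam i r| `^ beta * power_fun dot lam i (lam i) `^ (1 - beta)
          * `|r| `^ (1 - beta))%:E)%E)
  /\
  ((1%:E < b)%E ->
     (ereal_sup [set (`|l r|)%:E | l in Lam]
      <= (`|lam i r| / power_fun dot lam i (lam i) `^ exp_b b)%:E
         * ereal_sup [set (power_fun dot lam i l `^ exp_b b)%:E | l in Lam])%E).
Proof.
move=> r.
have [LamI _ _ Hmax] := Hgreedy i (leqnn i).
have [_ orth] := proj_spec Hdot i (reps dot lam) u.
have orth' : forall j, (j < i)%N -> dot r (reps dot lam j) = 0 by exact: orth.
have hK : forall l, Lam l -> `|l r| <= power_fun dot lam i l * `|r|.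
  move=> l Hl; have hv := riesz_spec (Hdual l Hl).
  have [hsp _] := proj_spec Hdot i (reps dot lam) (riesz dot l).
  have e : l r = dot (riesz dot l - Defs.proj dot i (reps dot lam) (riesz dot l)) r.
    rewrite hv (dotBl Hdot) (dotC Hdot (Defs.proj _ _ _ _) r).
    by rewrite (span_orth Hdot orth' hsp) subr0.
  by rewrite e; apply: (cs Hdot Hnorm).
have hZ : forall l, Lam l -> 0 < `|l r| ->
    (forall j, (j < i)%N -> l <> lam j) /\ l <> (fun=> 0).
  move=> l Hl hpos; split.
    move=> j ji lj; move: hpos; rewrite lj.
    have [Lj _ _ _] := Hgreedy j (ltnW ji).
    rewrite (riesz_spec (Hdual _ Lj)) (dotC Hdot).
    by rewrite (orth' j ji) normr0 ltxx.
  by move=> l0; move: hpos; rewrite l0 normr0 ltxx.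
have hG : forall l, Lam l -> 0 < `|l r| ->
    greedy_score b `|l r| (power_fun dot lam i l)
    <= greedy_score b `|lam i r| (power_fun dot lam i (lam i)).
  by move=> l Hl hpos; have [h1 h2] := hZ l Hl hpos; apply: Hmax.
have hP : forall l, Lam l -> 0 < `|l r| -> 0 < power_fun dot lam i l.
  move=> l Hl hpos; rewrite lt_def /power_fun normr_ge0 andbT.
  apply/eqP => h0; have := hK l Hl; rewrite /power_fun h0 mul0r; lra.
have hPF : forall l, 0 <= power_fun dot lam i l by move=> l; rewrite /power_fun.
clearbody r.
set PF := power_fun dot lam i in hK hG hP hPF *; clearbody PF.
split.
  move=> beta hbe hb1.
  have b0 : 0 <= beta by move: hb; rewrite hbe lee_fin.
  apply: ge_ereal_sup => _ [l Hl <-]; rewrite lee_fin.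
  have [hpos|h0] := ltP 0 `|l r|; last first.
    by apply: le_trans h0 _; rewrite !mulr_ge0 ?powR_ge0.
  have := hG l Hl hpos; rewrite hbe /= => hs.
  have ea : `|l r| = `|l r| `^ beta * `|l r| `^ (1 - beta).
    rewrite -powRD; last by apply/implyP => _; rewrite gt_eqF.
    by rewrite addrC subrK powRr1.
  have hb2 : 0 <= 1 - beta by rewrite subr_ge0.
  have hx : `|l r| \in Num.nneg by rewrite nnegrE.
  have hy : PF l * `|r| \in Num.nneg by rewrite nnegrE mulr_ge0.
  have h1 := @ge0_ler_powR R (1 - beta) hb2 _ _ hx hy (hK l Hl).
  rewrite powRM ?normr_ge0 // in h1.
  rewrite {1}ea; apply: le_trans (ler_wpM2l (powR_ge0 _ _) h1) _.
  by rewrite mulrA; apply: ler_wpM2r => //; apply: powR_ge0.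
move=> hb1.
apply: ge_ereal_sup => _ [l Hl <-].
suff H : `|l r| <= `|lam i r| / PF (lam i) `^ exp_b b
                   * PF l `^ exp_b b.
  apply: le_trans (_ : ((`|lam i r| / PF (lam i) `^ exp_b b)
                   * PF l `^ exp_b b)%:E <= _)%E.
    by rewrite lee_fin.
  rewrite EFinM; apply: lee_wpmul2l.
    by rewrite lee_fin divr_ge0 ?powR_ge0.
  by apply: ereal_sup_ubound; exists l.
have [hpos|h0] := ltP 0 `|l r|; last first.
  by apply: le_trans h0 _; apply: mulr_ge0; [apply: divr_ge0 => //; apply: powR_ge0 | apply: powR_ge0].
have hs := hG l Hl hpos; have pl := hP l Hl hpos.
have [[beta hbe]|hinf] : (exists beta, b = beta%:E) \/ b = +oo%E.
  by case: (b) hb1 => [x _|_|//]; [left; exists x|right].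
  rewrite hbe /= in hs *; rewrite hbe lte_fin in hb1.
  have hb0 : beta != 0 by rewrite gt_eqF //; lra.
  have hb0' : 1 - beta != 0 by rewrite subr_eq0 eq_sym gt_eqF.
  have sl : 0 < `|l r| `^ beta * PF l `^ (1 - beta).
    by rewrite mulr_gt0 // powR_gt0.
  have sr := lt_le_trans sl hs.
  have A0 : 0 < `|lam i r|.
    rewrite lt_def normr_ge0 andbT; apply/eqP => h.
    by move: sr; rewrite h powR0 // mul0r ltxx.
  have P0 : 0 < PF (lam i).
    rewrite lt_def hPF andbT; apply/eqP => h.
    by move: sr; rewrite h powR0 // mulr0 ltxx.
  exact: beta_ineq.
rewrite hinf /= in hs *.
have pl' := hPF (lam i).
rewrite !powRr1 ?(ltW pl) // -ler_pdivrMr //.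
Qed.
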